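(* Let $a,b,\epsilon>0$ and let $n,U,d,m$ be positive integers. Let $X\in\mathbb{R}^{n\times U\times d}$ satisfy $\|X_{i,u,\cdot}\|_2\le b$ for all $i\in\{1,\dots,n\}$ and $u\in\{1,\dots,U\}$, and let $M\in\mathbb{R}^{d\times m}$ be any fixed matrix. Then $$\log\mathcal{N}\Big(\{XA:\ A\in\mathbb{R}^{d\times m},\ \|A-M\|_{F}\le a\},\ \epsilon,\ \|\cdot\|_\infty\Big)\ \le\ \frac{36a^2b^2}{\epsilon^2}\log_2\!\Big[\Big(\frac{8ab}{\epsilon}+7\Big)mnU\Big],$$ where $\|\cdot\|_\infty$ is the maximum absolute entry on $\mathbb{R}^{n\times U\times m}$.
   Context: For $X\in\mathbb{R}^{n\times U\times d}$ and $A\in\mathbb{R}^{d\times m}$, $XA\in\mathbb{R}^{n\times U\times m}$ is defined by $(XA)_{i,u,j}=\sum_{o=1}^d X_{i,u,o}A_{o,j}$ (index $i$: sample, $u$: convolutional patch, $j$: output channel). $\|\cdot\|_F$ is the Frobenius norm. For a subset $V$ of a normed space $(\mathbb{R}^N,\|\cdot\|)$, the covering number $\mathcal{N}(V,\epsilon,\|\cdot\|)$ is the minimum cardinality $k$ of a collection $v^1,\dots,v^k\in\mathbb{R}^N$ with $\sup_{v\in V}\min_{j}\|v-v^j\|\le\epsilon$. $\log$ is the natural logarithm. *)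

(* Defs.v *)
From Stdlib Require Import Reals List.
Open Scope R_scope.

Fixpoint rsum (n : nat) (f : nat -> R) : R :=
  match n with
  | O => 0
  | S k => rsum k f + f k
  end.

(* (XA)_{i,u,j} = sum_{o<d} X_{i,u,o} A_{o,j} ; tensors as functions on 0-based indices *)
Definition tmul (d : nat) (X : nat -> nat -> nat -> R) (A : nat -> nat -> R)
  : nat -> nat -> nat -> R :=
  fun i u j => rsum d (fun o => X i u o * A o j).

Definition frob (d m : nat) (A : nat -> nat -> R) : R :=
  sqrt (rsum d (fun o => rsum m (fun j => (A o j) ^ 2))).

Definition row_norm (d : nat) (X : nat -> nat -> nat -> R) (i u : nat) : R :=
  sqrt (rsum d (fun o => (X i u o) ^ 2)).

Definition dist_inf_le (n U m : nat) (v w : nat -> nat -> nat -> R) (eps : R) : Prop :=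
  forall i u j, (i < n)%nat -> (u < U)%nat -> (j < m)%nat -> Rabs (v i u j - w i u j) <= eps.

(* centers (a list of points of R^{n x U x m}) form an eps-cover of V in ||.||_inf:
   sup_{v in V} min_j ||v - v^j||_inf <= eps (the min over a finite list is attained) *)
Definition is_cover (n U m : nat) (V : (nat -> nat -> nat -> R) -> Prop) (eps : R)
  (centers : list (nat -> nat -> nat -> R)) : Prop :=
  forall v, V v -> exists c, In c centers /\ dist_inf_le n U m v c eps.

Definition covering_number (n U m : nat) (V : (nat -> nat -> nat -> R) -> Prop) (eps : R)
  (N : nat) : Prop :=
  (exists centers, length centers = N /\ is_cover n U m V eps centers) /\
  (forall centers, is_cover n U m V eps centers -> (N <= length centers)%nat).

Definition log2 (x : R) : R := ln x / ln 2.

(* Main.v *)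
Require Import Defs.
From Stdlib Require Import Reals List.
From Stdlib Require Import Lia Lra Psatz ZArith Classical.
Open Scope R_scope.

Lemma rsum_ext n f g : (forall k, (k < n)%nat -> f k = g k) -> rsum n f = rsum n g.
Proof. induction n; simpl; intros H; auto. rewrite IHn by (intros; apply H; lia). rewrite H by lia. auto. Qed.

Lemma rsum_plus n f g : rsum n (fun k => f k + g k) = rsum n f + rsum n g.
Proof. induction n; simpl; [lra|]. rewrite IHn; lra. Qed.

Lemma rsum_scal n c f : rsum n (fun k => c * f k) = c * rsum n f.
Proof. induction n; simpl; [lra|]. rewrite IHn; lra. Qed.

Lemma rsum_minus n f g : rsum n (fun k => f k - g k) = rsum n f - rsum n g.
Proof. induction n; simpl; [lra|]. rewrite IHn; lra. Qed.

Lemma rsum_opp n f : rsum n (fun k => - f k) = - rsum n f.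
Proof. induction n; simpl; [lra|]. rewrite IHn; lra. Qed.

Lemma rsum_zero0 n : rsum n (fun _ => 0) = 0.
Proof. induction n; simpl; [lra|]. rewrite IHn; lra. Qed.

Lemma rsum_nonneg n f : (forall k, (k < n)%nat -> 0 <= f k) -> 0 <= rsum n f.
Proof. induction n; simpl; intros H; [lra|]. assert (0 <= f n) by (apply H; lia).
  assert (0 <= rsum n f) by (apply IHn; intros; apply H; lia). lra. Qed.

Lemma rsum_upd n j f g : (j < n)%nat ->
  rsum n (fun k => if Nat.eq_dec k j then f k else g k) = rsum n g + (f j - g j).
Proof.
  induction n; intros Hj; [lia|]. simpl.
  destruct (Nat.eq_dec n j).
  - subst. rewrite (rsum_ext _ _ g). lra. intros k Hk. destruct (Nat.eq_dec k j); [lia|auto].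
  - rewrite IHn by lia. lra.
Qed.

Lemma sqrt_le_sq s b : 0 <= s -> sqrt s <= b -> s <= b ^ 2.
Proof. intros H1 H2. rewrite <- (sqrt_sqrt s) by auto.
  assert (0 <= sqrt s) by apply sqrt_pos. simpl. nra. Qed.

Definition sym := option (((nat * nat) * nat) * bool).

Definition alpha (n U m : nat) : list sym :=
  None :: map Some (list_prod (list_prod (list_prod (seq 0 n) (seq 0 U)) (seq 0 m)) (true :: false :: nil)).

Fixpoint seqs (al : list sym) (t : nat) : list (list sym) :=
  match t with
  | O => nil :: nil
  | S t' => map (fun p => fst p :: snd p) (list_prod al (seqs al t'))
  end.

Lemma seqs_length al t : length (seqs al t) = (length al ^ t)%nat.
Proof. induction t; simpl; auto. rewrite length_map, length_prod, IHt. auto. Qed.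

Lemma seqs_in al t l : length l = t -> (forall x, In x l -> In x al) -> In l (seqs al t).
Proof.
  revert l; induction t; intros l Hl Hin; destruct l as [|x l]; simpl in *; try lia; auto.
  apply in_map_iff. exists (x, l). split; auto. apply in_prod_iff. split; auto.
Qed.

Definition sg (s : bool) : R := if s then 1 else -1.

Definition step (X : nat -> nat -> nat -> R) (eta : R) (c : sym) (W : nat -> nat -> R) : nat -> nat -> R :=
  match c with
  | None => W
  | Some (((i, u), j), s) => fun o j' => if Nat.eq_dec j' j then W o j' - eta * sg s * X i u o else W o j'
  end.

Fixpoint applyl X eta (l : list sym) W :=
  match l with
  | nil => W
  | c :: l' => applyl X eta l' (step X eta c W)
  end.

Definition DD d m (W A : nat -> nat -> R) := rsum d (fun o => rsum m (fun j => (W o j - A o j) ^ 2)).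

Lemma DD_nonneg d m W A : 0 <= DD d m W A.
Proof. apply rsum_nonneg; intros; apply rsum_nonneg; intros. apply pow2_ge_0. Qed.

Lemma DD_step d m X eta i u j s W A : (j < m)%nat ->
  DD d m (step X eta (Some (((i,u),j),s)) W) A =
  DD d m W A - 2 * eta * sg s * rsum d (fun o => (W o j - A o j) * X i u o)
   + eta ^ 2 * rsum d (fun o => X i u o ^ 2).
Proof.
  intros Hj. unfold DD, step.
  rewrite (rsum_ext d _ (fun o => rsum m (fun j0 => (W o j0 - A o j0) ^ 2) +
     ((- (2 * eta * sg s)) * ((W o j - A o j) * X i u o) + eta ^ 2 * (X i u o ^ 2)))).
  - rewrite rsum_plus, rsum_plus, !rsum_scal. lra.
  - intros o Ho.
    rewrite (rsum_ext m _ (fun k => if Nat.eq_dec k j then (W o k - eta * sg s * X i u o - A o k) ^ 2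
               else (W o k - A o k) ^ 2)).
    + rewrite rsum_upd by auto. cbv beta. destruct s; unfold sg; ring.
    + intros k Hk. destruct (Nat.eq_dec k j); auto.
Qed.

Lemma applyl_none X eta t W : applyl X eta (repeat None t) W = W.
Proof. induction t; simpl; auto. Qed.

Lemma progress (n U d m : nat) (X : nat -> nat -> nat -> R) (A : nat -> nat -> R) (b eps : R) W :
  0 < b -> 0 < eps ->
  (forall i u, (i < n)%nat -> (u < U)%nat -> row_norm d X i u <= b) ->
  (exists i u j, (i < n)%nat /\ (u < U)%nat /\ (j < m)%nat /\
          eps < Rabs (tmul d X A i u j - tmul d X W i u j)) ->
  exists c, In c (alpha n U m) /\
   DD d m (step X (eps / b ^ 2) c W) A <= DD d m W A - eps ^ 2 / b ^ 2.
Proof.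
  intros Hb He Hrow Hex.
  destruct Hex as (i & u & j & Hi & Hu & Hj & Hlt).
  set (e := rsum d (fun o => (W o j - A o j) * X i u o)).
  assert (He2 : tmul d X A i u j - tmul d X W i u j = - e) by
     (unfold e, tmul; rewrite <- rsum_minus, <- rsum_opp;
      apply rsum_ext; intros; ring).
  rewrite He2, Rabs_Ropp in Hlt.
  set (s := if Rle_dec 0 e then true else false).
  assert (Hs : sg s * e = Rabs e) by
     (unfold s, sg; destruct (Rle_dec 0 e); [rewrite Rabs_right by lra; ring|rewrite Rabs_left by lra; ring]).
  assert (Hr : rsum d (fun o => X i u o ^ 2) <= b ^ 2) by
     (apply sqrt_le_sq; [apply rsum_nonneg; intros; apply pow2_ge_0| apply Hrow; auto]).
  exists (Some (((i,u),j),s)). split.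
  { right. apply in_map.
    apply in_prod_iff; split; [apply in_prod_iff; split; [apply in_prod_iff; split|]|].
    all: try (apply in_seq; lia).
    unfold s; destruct (Rle_dec 0 e); simpl; auto. }
  rewrite DD_step by auto; fold e.
  replace (DD d m W A - 2 * (eps / b ^ 2) * sg s * e) with
         (DD d m W A - 2 * (eps / b ^ 2) * (sg s * e)) by ring; rewrite Hs.
  assert (0 < b ^ 2) by (apply pow_lt; auto).
  assert (Heta : 0 < eps / b ^ 2) by (apply Rdiv_lt_0_compat; nra).
  apply Rle_trans with (DD d m W A - 2 * (eps / b ^ 2) * eps + (eps / b ^ 2) ^ 2 * b ^ 2).
  - assert (0 <= (eps/b^2)^2) by apply pow2_ge_0; nra.
  - right; field; lra.
Qed.

Lemma main_ind (n U d m : nat) (X : nat -> nat -> nat -> R) (A : nat -> nat -> R) (b eps : R) :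
  0 < b -> 0 < eps ->
  (forall i u, (i < n)%nat -> (u < U)%nat -> row_norm d X i u <= b) ->
  forall t W, DD d m W A < INR (S t) * (eps ^ 2 / b ^ 2) ->
  exists l, length l = t /\ (forall x, In x l -> In x (alpha n U m)) /\
    dist_inf_le n U m (tmul d X A) (tmul d X (applyl X (eps / b ^ 2) l W)) eps.
Proof.
  intros Hb He Hrow. induction t as [|t IH]; intros W HW;
  (destruct (classic (exists i u j, (i < n)%nat /\ (u < U)%nat /\ (j < m)%nat /\
          eps < Rabs (tmul d X A i u j - tmul d X W i u j))) as [Hex|Hno];
   [destruct (progress n U d m X A b eps W Hb He Hrow Hex) as (c & Hc & Hdec)
   | match goal with |- exists l, length l = ?k /\ _ => exists (repeat None k) end; rewrite repeat_length; split; [auto|split];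
     [ intros x Hx; apply repeat_spec in Hx; subst; left; auto
     | rewrite applyl_none; intros i u j Hi Hu Hj; apply Rnot_lt_le; intro Hcc; apply Hno;
       exists i, u, j; auto ]]).
  - exfalso. pose proof (DD_nonneg d m (step X (eps / b ^ 2) c W) A).
    change (INR 1) with 1 in HW. set (cc := eps ^ 2 / b ^ 2) in *. lra.
  - destruct (IH (step X (eps / b ^ 2) c W)) as (l & Hl1 & Hl2 & Hl3).
    + rewrite S_INR in HW. rewrite S_INR in *. set (cc := eps ^ 2 / b ^ 2) in *. lra.
    + exists (c :: l). split; [simpl; auto|split].
      * intros x [Hx|Hx]; [subst; auto|auto].
      * simpl. auto.
Qed.

Lemma min_exists (P : nat -> Prop) k : P k -> exists N, P N /\ forall m, P m -> (N <= m)%nat.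
Proof.
  induction k as [k IH] using (well_founded_induction lt_wf). intros Hk.
  destruct (classic (exists m, (m < k)%nat /\ P m)) as [[m [Hm Pm]]|Hno].
  - apply (IH m Hm Pm).
  - exists k. split; auto. intros m Pm. destruct (le_lt_dec k m); auto. exfalso; apply Hno; eauto.
Qed.

Lemma ln_le' x y : 0 < x -> x <= y -> ln x <= ln y.
Proof. intros H1 H2. destruct H2. left; apply ln_increasing; auto. subst; lra. Qed.

Theorem mainTheorem1 (a b eps : R) (n U d m : nat)
  (X : nat -> nat -> nat -> R) (M : nat -> nat -> R) :
  0 < a -> 0 < b -> 0 < eps ->
  (0 < n)%nat -> (0 < U)%nat -> (0 < d)%nat -> (0 < m)%nat ->
  (forall i u, (i < n)%nat -> (u < U)%nat -> row_norm d X i u <= b) ->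
  exists N : nat,
    covering_number n U m
      (fun v => exists A : nat -> nat -> R,
         frob d m (fun o j => A o j - M o j) <= a /\ v = tmul d X A)
      eps N /\
    ln (INR N) <= 36 * a ^ 2 * b ^ 2 / eps ^ 2 *
                  log2 ((8 * a * b / eps + 7) * INR m * INR n * INR U).
Proof.
  intros Ha Hb He Hn HU Hd Hm Hrow.
  set (x := a ^ 2 * b ^ 2 / eps ^ 2).
  assert (Hx : 0 < x) by (unfold x; apply Rdiv_lt_0_compat; [apply Rmult_lt_0_compat|]; apply pow_lt; auto).
  destruct (archimed x) as [Hu1 Hu2].
  assert (Hup : (0 <= up x - 1)%Z) by (assert (0 < up x)%Z by (apply lt_0_IZR; lra); lia).
  set (T := Z.to_nat (up x - 1)).
  assert (HT : INR T = IZR (up x) - 1).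
  { unfold T. rewrite INR_IZR_INZ, Z2Nat.id by auto. rewrite minus_IZR. simpl. ring. }
  set (V := fun v => exists A : nat -> nat -> R,
         frob d m (fun o j => A o j - M o j) <= a /\ v = tmul d X A).
  set (cov := map (fun l => tmul d X (applyl X (eps / b ^ 2) l M)) (seqs (alpha n U m) T)).
  assert (Hcov : is_cover n U m V eps cov).
  { intros v [A [HA ->]].
    destruct (main_ind n U d m X A b eps Hb He Hrow T M) as (l & Hl1 & Hl2 & Hl3).
    - assert (HD : DD d m M A <= a ^ 2).
      { unfold frob in HA. apply sqrt_le_sq in HA.
        2: apply rsum_nonneg; intros; apply rsum_nonneg; intros; apply pow2_ge_0.
        unfold DD. erewrite rsum_ext. apply HA. intros o Ho; apply rsum_ext; intros; ring. }
      rewrite S_INR, HT.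
      assert (a ^ 2 = x * (eps ^ 2 / b ^ 2)) by (unfold x; field; lra).
      assert (0 < eps ^ 2 / b ^ 2) by (apply Rdiv_lt_0_compat; apply pow_lt; auto).
      nra.
    - exists (tmul d X (applyl X (eps / b ^ 2) l M)). split; auto.
      apply in_map_iff. exists l. split; auto. apply seqs_in; auto. }
  destruct (min_exists (fun N => exists centers, length centers = N /\ is_cover n U m V eps centers)
     (length cov)) as [N [[c0 [Hc0 Hc0c]] HNmin]].
  { exists cov; auto. }
  exists N. split.
  { split; [exists c0; auto|]. intros centers Hc. apply HNmin. eauto. }
  assert (HN1 : (1 <= N)%nat).
  { destruct (Hc0c (tmul d X M)) as [c [Hc _]].
    - exists M. split; auto. unfold frob.
      rewrite (rsum_ext _ _ (fun _ => 0)).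
      + rewrite rsum_zero0, sqrt_0. lra.
      + intros o Ho. rewrite (rsum_ext _ _ (fun _ => 0)). apply rsum_zero0. intros; simpl; ring.
    - subst N. destruct c0; simpl in *; [contradiction|lia]. }
  assert (HNL : (N <= length cov)%nat) by (apply HNmin; exists cov; auto).
  unfold cov in HNL. rewrite length_map, seqs_length in HNL.
  set (K := (n * U * m)%nat) in *.
  assert (Hal : length (alpha n U m) = (1 + K * 2)%nat).
  { unfold alpha, K. simpl. rewrite length_map, !length_prod, !length_seq. simpl. lia. }
  rewrite Hal in HNL.
  assert (HK : (1 <= K)%nat) by (unfold K; nia).
  assert (HINK : 1 <= INR K) by (apply (le_INR 1); auto).
  assert (Hln1 : ln (INR N) <= INR T * ln (INR (1 + K * 2))).
  { rewrite <- ln_pow. rewrite <- pow_INR. apply ln_le'. apply (lt_INR 0); lia. apply le_INR; auto.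
    apply (lt_INR 0); lia. }
  assert (HK2 : INR (1 + K * 2) <= (8 * a * b / eps + 7) * INR m * INR n * INR U).
  { assert (INR m * INR n * INR U = INR K) by (unfold K; rewrite !mult_INR; ring).
    assert (0 <= 8 * a * b / eps) by (apply Rlt_le, Rdiv_lt_0_compat; nra).
    rewrite plus_INR, mult_INR. simpl INR.
    replace ((8 * a * b / eps + 7) * INR m * INR n * INR U) with ((8 * a * b / eps + 7) * (INR m * INR n * INR U)) by ring.
    nra. }
  assert (Hlnpos : 0 <= ln (INR (1 + K * 2))).
  { rewrite <- ln_1. apply ln_le'. lra. rewrite plus_INR, mult_INR. simpl. lra. }
  assert (Hln2 : ln (INR (1 + K * 2)) <= ln ((8 * a * b / eps + 7) * INR m * INR n * INR U)).
  { apply ln_le'; auto. rewrite plus_INR, mult_INR. simpl. lra. }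
  assert (Hl2 : 0 < ln 2 < 1).
  { split. pose proof ln_lt_2; lra. rewrite <- (ln_exp 1). apply ln_increasing. lra.
    pose proof (exp_ineq1 1); lra. }
  unfold log2. fold x.
  set (Y := ln ((8 * a * b / eps + 7) * INR m * INR n * INR U)) in *.
  assert (INR T <= x) by lra.
  assert (0 <= INR T) by apply pos_INR.
  assert (Y <= Y / ln 2).
  { apply (Rmult_le_reg_r (ln 2)). lra. unfold Rdiv. rewrite Rmult_assoc, Rinv_l by lra. nra. }
  replace (36 * a ^ 2 * b ^ 2 / eps ^ 2 * (Y / ln 2)) with (36 * x * (Y / ln 2)) by (unfold x; field; lra).
  apply Rle_trans with (INR T * ln (INR (1 + K * 2))); auto.
  apply Rle_trans with (x * ln (INR (1 + K * 2))). nra.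
  nra.
Qed.
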